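(* Let $q\ge 3$ and $k\ge 2$ be integers. Then $$SO(S_{q,1,k})=(2qk-2k-4)\sqrt{2}+4k\sqrt{5}.$$
   Context: For a finite simple graph $G$, $SO(G)=\sum_{uv\in E(G)}\sqrt{d_u^2+d_v^2}$, where $d_u$ is the degree of $u$ in $G$ (the Sombor index). The spiro-chain $S_{q,1,k}$ is the chain of $k$ disjoint copies $G_1,\ldots,G_k$ of the cycle $C_q$ with respect to adjacent vertices $x_i,y_i\in V(G_i)$; i.e. it is obtained from the disjoint union of the $k$ cycles by identifying $y_i$ with $x_{i+1}$ for $i=1,\ldots,k-1$. *)

(* Defs.v *)
From HB Require Import structures.
From mathcomp Require Import all_boot all_order all_algebra.
Set Implicit Arguments. Unset Strict Implicit. Unset Printing Implicit Defensive.
Import Order.TTheory GRing.Theory Num.Theory.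

(* Graphs on vertex set 'I_n given by a (symmetric, irreflexive) boolean
   adjacency relation. *)

Definition deg (n : nat) (e : rel 'I_n) (u : 'I_n) : nat := #|[set v | e u v]|.

(* Sombor index: sum over edges uv (each unordered edge counted once, via u < v)
   of sqrt(d_u^2 + d_v^2). *)
Definition sombor (R : rcfType) (n : nat) (e : rel 'I_n) : R :=
  \sum_(u < n) \sum_(v < n | (u < v)%N && e u v)
     Num.sqrt (((deg e u)%:R : R) ^+ 2 + ((deg e v)%:R : R) ^+ 2).

Definition cyc_adj (q : nat) (a b : 'I_q) : bool :=
  (val b == (val a).+1 %% q) || (val a == (val b).+1 %% q).

(* Spiro-chain S_{q,1,k}: copy G_i (i < k) of C_q has vertices 0..q-1, with
   x_i = vertex 0 and y_i = vertex q-1 (adjacent in C_q).  Vertex j of copy i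
   is sent to the global vertex i*(q-1)+j, which identifies y_i with x_{i+1}. *)
Definition spiro_n (q k : nat) : nat := k * (q - 1) + 1.

Definition spiro_adj (q k : nat) : rel 'I_(spiro_n q k) :=
  fun u v => [exists i : 'I_k, exists j1 : 'I_q, exists j2 : 'I_q,
    [&& cyc_adj j1 j2, val u == i * (q - 1) + j1 & val v == i * (q - 1) + j2]].

Arguments spiro_adj q k : clear implicits.
Arguments sombor R [n] e.

(* Main.v *)
Require Import Defs.
From HB Require Import structures.
From mathcomp Require Import all_boot all_order all_algebra zify ring lra.
Import Order.TTheory GRing.Theory Num.Theory.
Set Implicit Arguments. Unset Strict Implicit.

Definition E (p a b : nat) : bool :=
  (b == a.+1) || (a == b.+1) || ((p %| a) && (b == a + p)) || ((p %| b) && (a == b + p)).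

Lemma adj1 q k (a b : nat) : (3 <= q)%N -> (a <= k * (q - 1))%N -> (b <= k * (q - 1))%N ->
  (exists i j1 j2, [/\ (i < k)%N, (j1 < q)%N && (j2 < q)%N,
     (j2 == j1.+1 %% q) || (j1 == j2.+1 %% q), a = i * (q-1) + j1 & b = i*(q-1)+j2])
  <-> E (q-1) a b.
Proof.
move=> hq ha0 hb; split.
  move=> [i [j1 [j2 [hi /andP[h1 h2] /orP[] /eqP hc ha hb']]]].
    case: (ltnP j1.+1 q) => hj.
      rewrite modn_small // in hc. rewrite /E; apply/orP; left; apply/orP; left;
      apply/orP; left; apply/eqP; lia.
    have e1 : j1 = q - 1 by lia.
    have eq : (j1.+1 = q)%N by lia.
    rewrite eq modnn in hc.
    rewrite /E; apply/orP; right; apply/andP; split.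
      by rewrite hb' hc addn0 dvdn_mull.
    apply/eqP; lia.
  case: (ltnP j2.+1 q) => hj.
    rewrite modn_small // in hc. rewrite /E; apply/orP; left; apply/orP; left;
    apply/orP; right; apply/eqP; lia.
  have e1 : j2 = q - 1 by lia.
  have eq : (j2.+1 = q)%N by lia.
  rewrite eq modnn in hc.
  rewrite /E; apply/orP; left; apply/orP; right; apply/andP; split.
    by rewrite ha hc addn0 dvdn_mull.
  apply/eqP; lia.
have hp : (0 < q - 1)%N by lia.
have hqp : q = (q - 1).+1 by lia.
move: hp hqp ha0 hb. set p := q - 1. move=> hp hqp ha0 hb.
rewrite /E => /orP[/orP[/orP[]|]|] /=.
- move=> /eqP hb1.
  exists (a %/ (q-1)), (a %% (q-1)), (a %% (q-1)).+1.
  have hm := ltn_pmod a hp.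
  have hd := divn_eq a (q-1).
  split.
  + rewrite ltn_divLR //; lia.
  + apply/andP; split; lia.
  + by rewrite (modn_small (m := (a %% p).+1)) ?eqxx //; lia.
  + lia.
  + lia.
- move=> /eqP hb1.
  exists (b %/ (q-1)), (b %% (q-1)).+1, (b %% (q-1)).
  have hm := ltn_pmod b hp.
  have hd := divn_eq b (q-1).
  split.
  + rewrite ltn_divLR //; lia.
  + apply/andP; split; lia.
  + by rewrite (modn_small (m := (b %% p).+1)) ?eqxx ?orbT //; lia.
  + lia.
  + lia.
- move=> /andP[/dvdnP[i ->] /eqP hb1].
  exists i, 0%N, (q-1).
  split.
  + have : (i * (q - 1) + (q-1) <= k * (q-1))%N by lia.
    rewrite -mulSnr leq_pmul2r //.
  + apply/andP; split; lia.
  + by rewrite -hqp modnn ?eqxx ?orbT.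
  + lia.
  + lia.
- move=> /andP[/dvdnP[i hi] /eqP hb1].
  exists i, (q-1), 0%N.
  split.
  + have : (i * (q - 1) + (q-1) <= k * (q-1))%N by lia.
    rewrite -mulSnr leq_pmul2r //.
  + apply/andP; split; lia.
  + by rewrite -hqp modnn ?eqxx ?orbT.
  + lia.
  + lia.
Qed.

Lemma adjE q k (u v : 'I_(spiro_n q k)) : (3 <= q)%N ->
  spiro_adj q k u v = E (q-1) u v.
Proof.
move=> hq.
have hu : (u <= k * (q-1))%N by have := ltn_ord u; rewrite {2}/spiro_n addn1 ltnS.
have hv : (v <= k * (q-1))%N by have := ltn_ord v; rewrite {2}/spiro_n addn1 ltnS.
have := adj1 hq hu hv => -[h1 h2].
apply/idP/idP.
  move=> /existsP[i /existsP[j1 /existsP[j2 /and3P[hc /eqP ha /eqP hb]]]].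
  apply: h1; exists i, j1, j2; split => //; by rewrite ?ltn_ord.
move=> /h2[i [j1 [j2 [hi /andP[h1' h2'] hc ha hb]]]].
apply/existsP; exists (Ordinal hi); apply/existsP; exists (Ordinal h1').
apply/existsP; exists (Ordinal h2'); apply/and3P; split => //; exact/eqP.
Qed.

Lemma Enat p a b : (2 <= p)%N -> (E p a b : nat) =
  ((b == a.+1) + (a == b.+1) + ((p %| a) && (b == a + p)) + ((p %| b) && (a == b + p)))%N.
Proof.
move=> hp; rewrite /E.
case: (p %| a); case: (p %| b); do 4 (case: eqP => ?); simpl; lia.
Qed.

Lemma sum_eq1 (n c : nat) (P : bool) :
  (\sum_(0 <= b < n) (P && (b == c) : nat) = P && (c < n))%N.
Proof.
elim: n => [|n IH]; first by rewrite big_geq // andbF.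
rewrite big_nat_recr //= IH.
case: P IH => //= IH.
case: (ltngtP c n) => h.
- by rewrite ltnS ltnW.
- by rewrite ltnS leqNgt h.
- by rewrite h ltnSn.
Qed.

Lemma sum_eq0 (n c : nat) :
  (\sum_(0 <= b < n) (b == c : nat) = (c < n))%N.
Proof. by rewrite -(sum_eq1 n c true). Qed.

Definition D (p N a : nat) : nat := if (p %| a) && (0 < a)%N && (a < N)%N then 4 else 2.

Lemma deg_eq q k (u : 'I_(spiro_n q k)) : (3 <= q)%N -> (1 <= k)%N ->
  deg (spiro_adj q k) u = D (q - 1) (k * (q - 1)) u.
Proof.
move=> hq.
have hu : (u <= k * (q-1))%N by have := ltn_ord u; rewrite {2}/spiro_n addn1 ltnS.
rewrite /deg -sum1dep_card big_mkcond /=.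
have -> : (\sum_(v < spiro_n q k) (if spiro_adj q k u v then 1 else 0) = \sum_(v < spiro_n q k) (E (q-1) u v : nat))%N.
  by apply: eq_bigr => v _; rewrite adjE //; case: (E _ _ _).
rewrite -(big_mkord xpredT (fun v => (E (q-1) u v : nat))).
have hp2 : (2 <= q - 1)%N by lia.
under eq_bigr => v _ do rewrite Enat //.
rewrite !big_split /= sum_eq0 sum_eq1.
move: hu; move: (nat_of_ord u) => a hu; clear u; rename a into u.
have e2 i : (u == i.+1) = (0 < u)%N && (i == u.-1) by case: eqP; case: eqP => /=; lia.
have e4 i : ((q - 1 %| i) && (u == i + (q - 1))) = (((q-1) <= u)%N && (q - 1 %| u - (q-1))) && (i == u - (q-1)).
  case: (i =P u - (q-1)) => [->|ne]; last by case: eqP => [?|]; [lia| rewrite !andbF].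
  rewrite andbT; case: (leqP (q-1) u) => h /=.
    by rewrite subnK // eqxx andbT.
  have -> : (u == u - (q - 1) + (q - 1)) = false by apply/negbTE; lia.
  by rewrite andbF.
under eq_bigr => i _ do rewrite e2. rewrite sum_eq1.
under eq_bigr => i _ do rewrite e4. rewrite sum_eq1.
move: hp2 hu; rewrite /D /spiro_n; set p := q - 1 => hp2 hu.
case hd : (p %| u); last first.
  clear e2 e4.
  have hu0 : (0 < u)%N by case: u hu hd => //; rewrite dvdn0.
  have huN : (u < k * p)%N.
    rewrite ltn_neqAle hu andbT; apply/eqP => e; by rewrite e dvdn_mull in hd.
  case: (leqP p u) => hpu /=.
    rewrite dvdn_subl ?dvdnn // hd /=; lia.
  lia.
move/dvdnP: hd => [i hi]; rewrite hi /=.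
have hp0 : (0 < p)%N by lia.
rewrite hi in hu. have hik : (i <= k)%N by rewrite -(leq_pmul2r hp0).
have h7 : (p <= i * p) && (p %| i * p - p) = (0 < i)%N.
  case: i {hi hu hik} => [|i]; first by rewrite mul0n leqNgt hp0.
  by rewrite mulSnr addnK dvdn_mull // leq_addl.
rewrite /= h7.
have h1 : ((i * p).+1 < k * p+1)%N = (i < k)%N by rewrite addn1 ltnS ltn_pmul2r.
have h2 : (0 < i * p)%N = (0<i)%N by rewrite muln_gt0 hp0 andbT.
have h3 : ((i * p).-1 < k * p+1)%N = true by apply/idP; lia.
have h4 : (i * p + p < k * p+1)%N = (i < k)%N by rewrite addn1 ltnS -mulSnr leq_pmul2r.
have h6 : (i * p - p < k * p+1)%N = true by apply/idP; lia.
rewrite h1 h2 h3 h4 h6 ltn_pmul2r //.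
move=> hk; case: (ltnP 0 i); case: (ltnP i k) => /=; lia.
Qed.

Lemma Esplit p a b : (2 <= p)%N ->
  ((a < b)%N && E p a b) = (b == a.+1) || ((p %| a) && (b == a + p)).
Proof.
move=> hp; rewrite /E.
case: (p %| a); case: (p %| b); do 4 (case: eqP => ?); case: (ltnP a b) => ?; simpl; try lia.
Qed.

Local Open Scope ring_scope.

Definition G (R : rcfType) (a b : nat) : R := Num.sqrt ((a%:R : R) ^+ 2 + (b%:R : R) ^+ 2).

Lemma if_or2 (R : rcfType) p u b (X : R) : (2 <= p)%N ->
  (if (b == u.+1) || ((p %| u)%N && (b == (u + p)%N)) then X else 0) =
  (if b == u.+1 then X else 0) + (if (p %| u)%N && (b == (u + p)%N) then X else 0).
Proof.
move=> hp; case: eqP => [->|] /=; last by rewrite add0r.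
have -> : (u.+1 == (u + p)%N) = false by apply/negbTE; lia.
by rewrite andbF addr0.
Qed.

Lemma step1 (R : rcfType) q k : (3 <= q)%N -> (1 <= k)%N ->
  sombor R (spiro_adj q k) =
  \sum_(0 <= a < spiro_n q k)
    ((if (a.+1 < spiro_n q k)%N then G R (D (q-1) (k * (q-1)) a) (D (q-1) (k * (q-1)) a.+1) else 0)
   + (if (q - 1 %| a)%N && (a + (q-1) < spiro_n q k)%N then
        G R (D (q-1) (k * (q-1)) a) (D (q-1) (k * (q-1)) (a + (q-1))) else 0)).
Proof.
move=> hq hk.
have hp : (2 <= q - 1)%N by lia.
rewrite /sombor big_mkord; apply: eq_bigr => u _.
rewrite big_mkcond /=.
under eq_bigr => v _ do rewrite adjE // !deg_eq //.
rewrite -(big_mkord xpredT (fun b => if (u < b)%N && E (q-1) u b then G R (D (q-1) (k * (q-1)) u) (D (q-1) (k * (q-1)) b) else 0)).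
under eq_bigr => b _ do rewrite Esplit // if_or2 //.
rewrite big_split /= -!big_mkcond /= big_nat1_eq.
rewrite (big_nat1_cond_eq _ _ (fun _ => (q - 1 %| u)%N)) /= andbC.
by [].
Qed.

Definition c (k i : nat) : nat := if (0 < i)%N && (i < k)%N then 4 else 2.

Lemma Dnd p N x : ~~ (p %| x)%N -> D p N x = 2%N.
Proof. by rewrite /D => /negbTE ->. Qed.

Lemma Dm p k i : (0 < p)%N -> D p (k * p) (i * p) = c k i.
Proof.
by move=> hp; rewrite /D /c dvdn_mull // muln_gt0 hp andbT ltn_pmul2r.
Qed.

Lemma ndvd p i j : (0 < j < p)%N -> (p %| i * p + j)%N = false.
Proof.
move=> /andP[h0 h1]; rewrite dvdn_addr ?dvdn_mull //.
apply/negbTE/negP => /dvdn_leq => /(_ h0); lia.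
Qed.

Lemma blocks (R : rcfType) (F : nat -> R) k p :
  \sum_(0 <= a < k * p) F a = \sum_(0 <= i < k) \sum_(0 <= j < p) F (i * p + j)%N.
Proof.
elim: k => [|k IH]; first by rewrite mul0n !big_geq.
rewrite big_nat_recr //= -IH mulSnr (big_cat_nat _ (leq_addr _ _)) //=.
congr (_ + _).

rewrite -{1}(add0n (k * p)%N) big_addn (addnC (k * p)%N) addnK.
by apply: eq_bigr => j _; rewrite addnC.
Qed.

Lemma block (R : rcfType) m k i : (i < k)%N ->
  \sum_(0 <= j < m.+2)
    ((if ((i * m.+2 + j).+1 < k * m.+2 + 1)%N then
        G R (D m.+2 (k * m.+2) (i * m.+2 + j)) (D m.+2 (k * m.+2) (i * m.+2 + j).+1) else 0)
   + (if (m.+2 %| i * m.+2 + j)%N && (i * m.+2 + j + m.+2 < k * m.+2 + 1)%N then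
        G R (D m.+2 (k * m.+2) (i * m.+2 + j)) (D m.+2 (k * m.+2) (i * m.+2 + j + m.+2)) else 0))
  = G R (c k i) 2 + (G R 2 2) *+ m + G R 2 (c k i.+1) + G R (c k i) (c k i.+1).
Proof.
move=> hi.
set p := m.+2.
have hp : (0 < p)%N by [].
have hip : (i * p + p <= k * p)%N by rewrite -mulSnr leq_pmul2r.
rewrite big_split /=; congr (_ + _); last first.
  rewrite big_nat_recl //= big1_seq ?addr0; last first.
    move=> j /andP[_]; rewrite mem_index_iota => /andP[_ hj].
    by rewrite -addnS ndvd //; apply/andP; split; rewrite /p; lia.
  rewrite addn0 dvdn_mull //=.
  have -> : (i * p + p < k * p + 1)%N = true by lia.
  by rewrite -mulSnr !Dm.
have hip' : (i * p + p < k * p + 1)%N by lia.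
rewrite big_nat_recl // big_nat_recr //= addn0.
have -> : ((i * p).+1 < k * p + 1)%N = true by lia.
have -> : ((i * p + m.+1).+1 < k * p + 1)%N = true by rewrite /p in hip' *; lia.
rewrite Dm // (Dnd _ (x := (i * p).+1)); last by rewrite -addn1 ndvd.
rewrite (Dnd _ (x := (i * p + m.+1))); last first.
  by rewrite ndvd //; rewrite /p; lia.
rewrite -addnS -mulSnr Dm //.
rewrite (eq_big_nat _ _ (F2 := fun _ => G R 2 2)); last first.
  move=> j /andP[_ hj].
  have -> : ((i * p + j.+1).+1 < k * p + 1)%N = true by rewrite /p in hip' *; lia.
  rewrite (Dnd _ (x := (i * p + j.+1))); last by rewrite ndvd //; rewrite /p; lia.
  by rewrite (Dnd _ (x := (i * p + j.+1).+1)) // -addnS ndvd //; rewrite /p; lia.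
by rewrite sumr_const_nat subn0 !addrA.
Qed.

Lemma G22 (R : rcfType) : G R 2 2 = 2 * Num.sqrt 2.
Proof.
rewrite /G (_ : (2%:R : R) ^+ 2 + 2%:R ^+ 2 = 2 ^+ 2 * 2); last by rewrite -!natrX; ring.
by rewrite sqrtrM ?sqrtr_sqr ?ger0_norm // exprn_ge0.
Qed.

Lemma G44 (R : rcfType) : G R 4 4 = 4 * Num.sqrt 2.
Proof.
rewrite /G (_ : (4%:R : R) ^+ 2 + 4%:R ^+ 2 = 4 ^+ 2 * 2); last by ring.
by rewrite sqrtrM ?sqrtr_sqr ?ger0_norm // exprn_ge0.
Qed.

Lemma G24 (R : rcfType) : G R 2 4 = 2 * Num.sqrt 5.
Proof.
rewrite /G (_ : (2%:R : R) ^+ 2 + 4%:R ^+ 2 = 2 ^+ 2 * 5); last by ring.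
by rewrite sqrtrM ?sqrtr_sqr ?ger0_norm // exprn_ge0.
Qed.

Lemma G42 (R : rcfType) : G R 4 2 = 2 * Num.sqrt 5.
Proof. by rewrite /G addrC -[RHS](G24 R). Qed.

Unset Implicit Arguments.
Theorem mainTheorem8 (R : rcfType) (q k : nat) (hq : (3 <= q)%N) (hk : (2 <= k)%N) :
  sombor R (spiro_adj q k) =
    (2 * q%:R * k%:R - 2 * k%:R - 4) * Num.sqrt (2 : R)
    + 4 * k%:R * Num.sqrt (5 : R).
Proof.
rewrite step1 //; last by lia.
have [m em] : exists m, q = m.+3 by exists (q - 3)%N; lia.
have [l el] : exists l, k = l.+2 by exists (k - 2)%N; lia.
have ep : (q - 1)%N = m.+2 by lia.
rewrite ep /spiro_n ep.
rewrite (big_cat_nat _ (n := (k * m.+2)%N)) //=; last by rewrite addn1.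
rewrite addn1 big_nat1 ltnn.
have -> : (k * m.+2 + m.+2 < (k * m.+2).+1)%N = false by lia.
rewrite andbF !addr0 -[(k * m.+2).+1]addn1.
rewrite blocks.
rewrite (eq_big_nat _ _ (F2 := fun i => G R (c k i) 2 + (G R 2 2) *+ m + G R 2 (c k i.+1) + G R (c k i) (c k i.+1))); last first.
  by move=> i /andP[_ hi]; rewrite block.
rewrite el big_nat_recl // big_nat_recr //=.
rewrite (eq_big_nat _ _ (F2 := fun i => G R 4 2 + (G R 2 2) *+ m + G R 2 4 + G R 4 4)); last first.
  move=> i /andP[_ hi]; rewrite /c /=.
  have h1 : (i.+1 < l.+2)%N by lia.
  have h2 : (i.+2 < l.+2)%N by lia.
  by rewrite h1 h2.
rewrite sumr_const_nat subn0 /c /=.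
have -> : (l.+1 < l.+2)%N by [].
rewrite ltnn /= G22 G44 G24 G42 em.
ring.
Qed.
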